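(* Let $G$ be a graph, $r\ge1$, $k\in\mathbb{N}$, and let $L_S$ be a subordering of $S\subseteq V(G)$ with free vertices $T=V(G)\setminus S$. Assume there is a full right extension $L'$ of $L_S$ with $\mathrm{wcol}_r(G,L')\le k$. If $u\in T$ satisfies $|\mathrm{Wreach}_r(G,L_S,u)|=k$, then there is a full right extension $\overline{L}$ of $L_S$ in which $u$ is the leftmost vertex of $T$ and $\mathrm{wcol}_r(G,\overline{L})\le k$.
   Context: All graphs are finite, undirected, without loops. A path has length equal to its number of vertices minus one. A subordering $L_S$ is a linear ordering of $S\subseteq V(G)$; $\preceq_{L_S}$ means precedes or equal. For a subordering $L_S$ and $u,v\in V(G)$, $u\in\mathrm{Wreach}_r(G,L_S,v)$ iff either $u=v$, or $u\in S$ and there is a path $P$ of length at most $r$ between $u$ and $v$ with $u\preceq_{L_S} w$ for all $w\in V(P)\cap S$; $\mathrm{wcol}_r(G,L_S)=\max_{v}|\mathrm{Wreach}_r(G,L_S,v)|$. A full right extension of $L_S$ is a linear ordering of $V(G)$ whose restriction to $S$ is $L_S$ and in which every vertex of $S$ precedes every vertex of $V(G)\setminus S$. *)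

(* Defs.v *)
From mathcomp Require Import all_boot.
Set Implicit Arguments. Unset Strict Implicit. Unset Printing Implicit Defensive.

(* A subordering L_S of S is a duplicate-free
   sequence L : seq T; S is the set of its elements and u precedes-or-equals w
   iff index u L <= index w L. *)

Section WColDefs.
Variables (T : finType) (e : rel T).

Definition is_path_le (r : nat) (u v : T) (q : seq T) : bool :=
  [&& path e u q, last u q == v, uniq (u :: q) & size q <= r].

Definition min_on_path (L : seq T) (u : T) (q : seq T) : bool :=
  all (fun w => (w \in L) ==> (index u L <= index w L)) (u :: q).

Definition Wreach (r : nat) (L : seq T) (v : T) : {set T} :=
  [set u | (u == v) ||
     ((u \in L) &&
      [exists n : 'I_r.+1, exists t : n.-tuple T,
          is_path_le r u v t && min_on_path L u t])].

Definition wcol (r : nat) (L : seq T) : nat := \max_(v : T) #|Wreach r L v|.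

Definition subordering (L : seq T) : Prop := uniq L.

Definition full_right_extension (L Lf : seq T) : Prop :=
  [/\ uniq Lf, (forall x : T, x \in Lf),
      filter (fun x => x \in L) Lf = L &
      (forall x y : T, x \in L -> y \notin L -> index x Lf < index y Lf)].

End WColDefs.

(* Main.v *)
Require Import Defs.
From mathcomp Require Import all_boot.
From mathcomp Require Import zify.

Set Implicit Arguments. Unset Strict Implicit. Unset Printing Implicit Defensive.

Lemma filter_index_le (T : eqType) (a : pred T) (s : seq T) (x y : T) :
  a x -> a y ->
  (index x (filter a s) <= index y (filter a s)) = (index x s <= index y s).
Proof.
move=> ax ay; elim: s => [|z s IH] //=.
case: (eqVneq z x) => [ezx|nzx].
  by subst z; rewrite ax /= eqxx.
case: (eqVneq z y) => [ezy|nzy].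
  by subst z; rewrite ay /= eqxx (negbTE nzx).
case: (a z) => /=; rewrite ?(negbTE nzx) ?(negbTE nzy) //=.
Qed.

Lemma fre_ord (T : finType) (LS Lf : seq T) x y :
  full_right_extension LS Lf -> x \in LS -> y \in LS ->
  (index x Lf <= index y Lf) = (index x LS <= index y LS).
Proof.
case=> _ _ hf _ hx hy.
have := @filter_index_le _ (fun z => z \in LS) Lf x y hx hy.
by rewrite hf => ->.
Qed.

Lemma WreachP (T : finType) (e : rel T) r L v w :
  reflect (w = v \/ (w \in L /\ exists t : seq T,
             is_path_le e r w v t && min_on_path L w t))
          (w \in Wreach e r L v).
Proof.
rewrite inE; apply: (iffP orP).
- case=> [/eqP->|/andP[wL /existsP[n /existsP[t /andP[h1 h2]]]]];
    [by left | right; split=> //; exists t; rewrite h1 h2 //].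
- case=> [->|[wL [t /andP[h1 h2]]]]; [by left; rewrite eqxx | right; rewrite wL /=].
  have hs : size t < r.+1 by case/and4P: h1.
  apply/existsP; exists (Ordinal hs); apply/existsP; exists (in_tuple t).
  by rewrite h1 h2.
Qed.

Lemma min_on_path_trans (T : finType) (L1 L2 : seq T) w t :
  (forall y, y \in w :: t -> (y \in L1) ==> (index w L1 <= index y L1) ->
     (y \in L2) ==> (index w L2 <= index y L2)) ->
  min_on_path L1 w t -> min_on_path L2 w t.
Proof. by move=> H /allP h; apply/allP => y hy; exact: H y hy (h y hy). Qed.

Section Main.
Variables (T : finType) (e : rel T) (e_sym : symmetric e) (r k : nat)
  (LS L' : seq T) (u : T).
Hypothesis hLS : uniq LS.
Hypothesis hL' : full_right_extension LS L'.
Hypothesis hwc : wcol e r L' <= k.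
Hypothesis uS : u \notin LS.
Hypothesis hk : #|Wreach e r LS u| = k.

Definition pT := fun x => (x \notin LS) && (x != u).
Definition Lbar := LS ++ u :: filter pT L'.

Lemma allL' y : y \in L'. Proof. by case: hL'. Qed.

Lemma index_Lbar_LS x : x \in LS -> index x Lbar = index x LS.
Proof. by move=> hx; rewrite /Lbar index_cat hx. Qed.

Lemma index_Lbar_u : index u Lbar = size LS.
Proof. by rewrite /Lbar index_cat (negbTE uS) /= eqxx addn0. Qed.

Lemma index_Lbar_T x : pT x -> index x Lbar = size LS + (index x (filter pT L')).+1.
Proof.
case/andP=> xS xu; rewrite /Lbar index_cat (negbTE xS) /=.
by rewrite eq_sym (negbTE xu).
Qed.

Lemma allLbar y : y \in Lbar.
Proof.
rewrite /Lbar mem_cat in_cons mem_filter allL' /pT andbT.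
by case: (y \in LS); case: (y == u).
Qed.

Lemma Lbar_fre : full_right_extension LS Lbar.
Proof.
split.
- rewrite /Lbar cat_uniq hLS /= mem_filter /pT eqxx andbF /= filter_uniq; last by case: hL'.
  rewrite (negbTE uS) andbT /=; apply/hasP => -[y].
  by rewrite mem_filter => /andP[/andP[/negbTE -> _] _].
- exact: allLbar.
- rewrite /Lbar filter_cat /= (negbTE uS).
  have -> : [seq x <- LS | x \in LS] = LS by apply/all_filterP; apply/allP.
  suff -> : [seq x <- [seq x <- L' | pT x] | x \in LS] = [::] by rewrite cats0.
  apply/eqP/negPn; rewrite -has_filter; apply/hasP => -[y]; rewrite mem_filter /pT.
  by case/andP=> /andP[/negbTE ->].
- move=> x y hx hy; rewrite index_Lbar_LS //.
  rewrite /Lbar index_cat (negbTE hy).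
  by apply: ltn_addr; rewrite index_mem.
Qed.

Lemma stepA : Wreach e r LS u \subset Wreach e r L' u.
Proof.
apply/subsetP => w /WreachP [->|[wS [t /andP[hp hm]]]]; apply/WreachP; first by left.
right; split; first exact: allL'.
exists t; rewrite hp /=; apply: min_on_path_trans hm => y _.
rewrite allL' /=; case yS: (y \in LS) => /= h.
  by rewrite (fre_ord hL' wS yS).
by apply: ltnW; case: hL' => _ _ _ -> //; rewrite yS.
Qed.

Lemma stepB : Wreach e r L' u = Wreach e r LS u.
Proof.
apply/eqP; rewrite eq_sym eqEcard stepA /= hk.
exact: leq_trans (leq_bigmax u) hwc.
Qed.

Lemma stepD : Wreach e r Lbar u \subset Wreach e r LS u.
Proof.
apply/subsetP => w /WreachP [->|[_ [t /andP[hp hm]]]]; apply/WreachP; first by left.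
case: (eqVneq w u) => [wu|nwu]; first by left.
have umem : u \in w :: t.
  by case/and4P: hp => _ /eqP <- _ _; apply: mem_last.
have wS : w \in LS.
  apply/negPn/negP => wS.
  have := allP hm u umem; rewrite allLbar /= index_Lbar_u index_Lbar_T.
    by rewrite leqNgt addnS ltnS leq_addr.
  by rewrite /pT wS.
right; split=> //; exists t; rewrite hp /=.
apply: min_on_path_trans hm => y _; rewrite allLbar /=.
by case yS: (y \in LS) => //=; rewrite !index_Lbar_LS.
Qed.


Lemma stepC v : v != u -> Wreach e r Lbar v \subset Wreach e r L' v.
Proof.
move=> nvu.
apply/subsetP => w /WreachP [->|[_ [t /andP[hp hm]]]]; apply/WreachP; first by left.
right; split; first exact: allL'.
case: (eqVneq w u) => [wu|nwu]; last first.
  exists t; rewrite hp /=; apply: min_on_path_trans hm => y _.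
  rewrite allLbar allL' /=.
  case wS: (w \in LS).
    case yS: (y \in LS).
      by rewrite (fre_ord hL' wS yS) (fre_ord Lbar_fre wS yS).
    by move=> _; apply: ltnW; case: hL' => _ _ _ -> //; rewrite yS.
  have pw : pT w by rewrite /pT wS nwu.
  case yS: (y \in LS).
    by case: Lbar_fre => _ _ _ /(_ y w yS); rewrite wS => /(_ isT); move=> hlt; rewrite leqNgt hlt.
  case: (eqVneq y u) => [yu|nyu].
    by rewrite yu index_Lbar_u index_Lbar_T // leqNgt addnS ltnS leq_addr.
  have py : pT y by rewrite /pT yS nyu.
  by rewrite !index_Lbar_T // leq_add2l ltnS filter_index_le.
subst w.
exists t; rewrite hp /=.
have nS : forall y, y \in u :: t -> y \notin LS.
  move=> y hy; apply/negP => yS; have := allP hm y hy.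
  by rewrite allLbar /= index_Lbar_u index_Lbar_LS // leqNgt index_mem yS.
case: (arg_minnP (fun y => index y L') (mem_head u t)) => x xin xmin.
suff xu : x = u.
  by apply/allP => y hy; rewrite allL' /= -xu; exact: xmin.
have : x \in Wreach e r L' u.
  apply/WreachP; case: (eqVneq x u) => [->|nxu]; first by left.
  right; split; first exact: allL'.
  have xt : x \in t by have xin2 : x \in u :: t := xin; move: xin2; rewrite in_cons (negbTE nxu).
  have [p1 [p2 def_t]] : exists p1 p2, t = p1 ++ x :: p2
    by case/splitPr: xt => p1 p2; exists p1, p2.
  rewrite def_t in hp.
  exists (rev (u :: p1)).
  case/and4P: hp => hpath _ huniq hsize.
  apply/andP; split; first apply/and4P; first split.
  - rewrite cat_path /= in hpath; case/and3P: hpath => h1 h2 _.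
    have hp1 : path e u (rcons p1 x) by rewrite rcons_path h1 h2.
    have := rev_path e u (rcons p1 x); rewrite last_rcons belast_rcons => ->.
    by rewrite (@eq_path _ _ e) // => a b; exact: e_sym.
  - by rewrite rev_cons last_rcons.
  - rewrite -rev_rcons rev_uniq.
    have : uniq ((u :: rcons p1 x) ++ p2) by rewrite cat_cons cat_rcons.
    by rewrite cat_uniq => /andP[].
  - by rewrite size_rev /=; rewrite size_cat /= in hsize; lia.
  - apply/allP => y hy; rewrite allL' /=; apply: xmin.
    move: hy; rewrite !(in_cons, mem_rev, mem_cat) => hy2.
    have : y \in u :: t; last by [].
    rewrite def_t !(in_cons, mem_cat); move: hy2.
    by case: (y == x); case: (y == u); case: (y \in p1); rewrite ?orbT.
rewrite stepB => /WreachP [//|[xS _]].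
by have := nS x xin; rewrite xS.
Qed.

Lemma Lbar_first w : w \notin LS -> index u Lbar <= index w Lbar.
Proof.
move=> wS; rewrite index_Lbar_u /Lbar index_cat (negbTE wS); exact: leq_addr.
Qed.

Lemma wcol_Lbar : wcol e r Lbar <= k.
Proof.
apply/bigmax_leqP => v _.
case: (eqVneq v u) => [->|nvu].
  by rewrite -hk; apply: subset_leq_card; exact: stepD.
apply: leq_trans (subset_leq_card (stepC nvu)) _.
exact: leq_trans (leq_bigmax v) hwc.
Qed.
End Main.

Theorem proposition8 (T : finType) (e : rel T)
  (e_sym : symmetric e) (e_irr : irreflexive e)
  (r k : nat) (hr : 1 <= r) (LS : seq T) (hLS : subordering LS) :
  (exists L' : seq T, full_right_extension LS L' /\ wcol e r L' <= k) ->
  forall u : T, u \notin LS -> #|Wreach e r LS u| = k ->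
  exists Lbar : seq T,
    [/\ full_right_extension LS Lbar,
        (forall w : T, w \notin LS -> index u Lbar <= index w Lbar) &
        wcol e r Lbar <= k].
Proof.
move=> [L' [hL' hwc]] u uS hk.
exists (Lbar LS L' u); split.
- exact: Lbar_fre.
- exact: Lbar_first.
- exact: wcol_Lbar.
Qed.
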